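(* Let $f(a,b,c,d,e,x,y)$ be analytic in a neighbourhood of the origin of $\mathbb{C}^7$. Suppose that, with $F(X,Y)=f(a,b,c,d,e,X,Y)$, $f$ satisfies in a neighbourhood of the origin the equation $$x\Big\{F(xq,y)-F(xq,yq)-(d+e)q^{-1}\big[F(xq,yq)-F(xq,yq^2)\big]+de\,q^{-2}\big[F(xq,yq^2)-F(xq,yq^3)\big]\Big\}$$ $$=y\Big\{\big[F(xq,yq)-F(x,yq)\big]-(a+b+c)\big[F(xq,yq^2)-F(x,yq^2)\big]+(ab+ac+bc)\big[F(xq,yq^3)-F(x,yq^3)\big]-abc\big[F(xq,yq^4)-F(x,yq^4)\big]\Big\}.$$ Then $$f(a,b,c,d,e,x,y)=\mathbb{E}(a,b,c,d,e,y\theta_x)\{f(a,b,c,d,e,x,0)\}.$$ Precisely: writing $f=\sum_{k\ge0}A_k(x)y^k$ (with $a,b,c,d,e$ fixed), one has for each $k\ge0$, as power series in $x$, $$A_k(x)=\frac{(-1)^kq^{\binom k2}(a,b,c;q)_k}{(q,d,e;q)_k}\,\theta_x^k\{f(a,b,c,d,e,x,0)\}.$$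
   Context: Throughout, $0<q<1$. $(\alpha;q)_0=1$, $(\alpha;q)_n=\prod_{j=0}^{n-1}(1-\alpha q^j)$, and $(\alpha_1,\dots,\alpha_r;q)_n=\prod_i(\alpha_i;q)_n$. $\theta_x$ is the $q$-difference operator $\theta_x\{g(x)\}=\frac{g(xq^{-1})-g(x)}{q^{-1}x}$. On power series it acts termwise by $\theta_x\{x^m\}=q^{1-m}(1-q^m)x^{m-1}$. The operator is $\mathbb{E}(a,b,c,d,e,y\theta_x)=\sum_{n\ge0}\frac{(-1)^nq^{\binom n2}(a,b,c;q)_n}{(q,d,e;q)_n}(y\theta_x)^n$. *)

(* Defs.v *)
(* Complex numbers: R[i] (mathcomp-real-closed)
   over an arbitrary realType R, equipped with its normed/topological structure
   through the regular-algebra alias (R[i])^o. *)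
From HB Require Import structures.
From mathcomp Require Import all_boot all_order all_algebra.
From mathcomp Require Import all_classical all_reals all_analysis.
From mathcomp Require Import complex.
Set Implicit Arguments. Unset Strict Implicit. Unset Printing Implicit Defensive.
Import Order.TTheory GRing.Theory Num.Theory.
Import numFieldNormedType.Exports.
Local Open Scope classical_set_scope.
Local Open Scope ring_scope.

Section Defs.
Variable R : realType.
Local Notation C := ((R[i])^o).

Definition mono (N : nat) (z : 'I_N -> C) (al : {ffun 'I_N -> nat}) : C :=
  \prod_(i < N) z i ^+ al i.

Definition hom (N : nat) (c : {ffun 'I_N -> nat} -> C) (z : 'I_N -> C) (n : nat) : C :=
  \sum_(be : {ffun 'I_N -> 'I_n.+1} | (\sum_(i < N) (be i : nat) == n)%N)
     c [ffun i => (be i : nat)] * mono z [ffun i => (be i : nat)].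

(* same with absolute values (for absolute convergence) *)
Definition abshom (N : nat) (c : {ffun 'I_N -> nat} -> C) (z : 'I_N -> C) (n : nat) : C :=
  \sum_(be : {ffun 'I_N -> 'I_n.+1} | (\sum_(i < N) (be i : nat) == n)%N)
     `|c [ffun i => (be i : nat)]| * \prod_(i < N) `|z i| ^+ (be i : nat).

Definition power_series_on (N : nat) (c : {ffun 'I_N -> nat} -> C) (r : R)
    (F : ('I_N -> C) -> C) : Prop :=
  forall z : 'I_N -> C, (forall i, `|z i| < (r%:C)%C) ->
    cvgn (series (abshom c z)) /\ series (hom c z) @ \oo --> F z.

Definition analytic_at0 (N : nat) (F : ('I_N -> C) -> C) : Prop :=
  exists r : R, 0 < r /\ exists c, power_series_on c r F.

Definition uncurry7 (f : C -> C -> C -> C -> C -> C -> C -> C) : ('I_7 -> C) -> C :=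
  fun z => f (z (inord 0)) (z (inord 1)) (z (inord 2)) (z (inord 3))
             (z (inord 4)) (z (inord 5)) (z (inord 6)).

Definition uncurry2 (F : C -> C -> C) : ('I_2 -> C) -> C :=
  fun z => F (z (inord 0)) (z (inord 1)).

(* multi-index (m, k) : exponent m of x, exponent k of y *)
Definition idx2 (m k : nat) : {ffun 'I_2 -> nat} :=
  [ffun i : 'I_2 => if (i : nat) == 0%N then m else k].

Variable q : R.

Definition qpoch (al : C) (n : nat) : C := \prod_(j < n) (1 - al * ((q%:C)%C : C) ^+ j).

(* theta_x acting termwise on a power series sum_n s n x^n (given by its
   coefficient sequence): theta_x {x^n} = q^(1-n) (1-q^n) x^(n-1); the result
   is returned as its coefficient sequence. *)
Definition theta_coef (s : nat -> C) : nat -> C :=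
  fun m => (((q%:C)%C : C) ^+ m)^-1 * (1 - ((q%:C)%C : C) ^+ m.+1) * s m.+1.

(* k-th coefficient of the operator E(a,b,c,d,e, y theta_x) *)
Definition Ecoef (a b c d e : C) (k : nat) : C :=
  (-1) ^+ k * ((q%:C)%C : C) ^+ 'C(k, 2) * (qpoch a k * qpoch b k * qpoch c k)
  / (qpoch ((q%:C)%C : C) k * qpoch d k * qpoch e k).

Definition qeq (f : C -> C -> C -> C -> C -> C -> C -> C) (a b c d e x y : C) : Prop :=
  let F := f a b c d e in
  let Q := ((q%:C)%C : C) in
  x * (F (x * Q) y - F (x * Q) (y * Q)
       - (d + e) * Q^-1 * (F (x * Q) (y * Q) - F (x * Q) (y * Q ^+ 2))
       + d * e * Q ^- 2 * (F (x * Q) (y * Q ^+ 2) - F (x * Q) (y * Q ^+ 3)))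
  =
  y * ((F (x * Q) (y * Q) - F x (y * Q))
       - (a + b + c) * (F (x * Q) (y * Q ^+ 2) - F x (y * Q ^+ 2))
       + (a * b + a * c + b * c) * (F (x * Q) (y * Q ^+ 3) - F x (y * Q ^+ 3))
       - a * b * c * (F (x * Q) (y * Q ^+ 4) - F x (y * Q ^+ 4))).

End Defs.

(* Main.v *)
Require Import Defs.
From HB Require Import structures.
From mathcomp Require Import all_boot all_order all_algebra.
From mathcomp Require Import all_classical all_reals all_analysis.
From mathcomp Require Import complex.
From mathcomp Require Import lra ring.
Set Implicit Arguments. Unset Strict Implicit. Unset Printing Implicit Defensive.
Import Order.TTheory GRing.Theory Num.Theory.
Import numFieldNormedType.Exports.
Local Open Scope classical_set_scope.
Local Open Scope ring_scope.

Section Core.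
Variable R : realType.
Local Notation C := ((R[i])^o).

Lemma ge0_realC (x : C) : 0 <= x -> x = (complex.Re x)%:C%C.
Proof.
move=> /ger0_Im; case: x => a b /= ->; done.
Qed.

Lemma normC_real (x : C) : `|x| = (complex.Re `|x|)%:C%C.
Proof. by apply: ge0_realC. Qed.

Lemma normRC (t : R) : 0 <= t -> `|(t%:C)%C : C| = (t%:C)%C.
Proof. by move=> ht; apply: ger0_norm; rewrite ler0c. Qed.

Lemma core (a : nat -> C) (B : C) :
  (forall n, `|a n| <= B) ->
  (forall t : R, 0 < t -> t <= 2^-1 ->
     series (fun j => a j * ((t%:C)%C : C) ^+ j) @ \oo --> (0 : C)) ->
  forall n, a n = 0.
Proof.
move=> Hb Hs n; elim/ltn_ind: n => n IH.
have B0 : 0 <= B by apply: le_trans (Hb 0).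
set b := complex.Re B.
have Bb : B = (b%:C)%C by apply: ge0_realC.
have b0 : 0 <= b by rewrite -ler0c -Bb.
set al := complex.Re `|a n|.
have Ha : `|a n| = (al%:C)%C by apply: normC_real.
have al0 : 0 <= al by rewrite -ler0c -Ha.
have claim : forall t : R, 0 < t -> t <= 2^-1 -> al <= 2 * b * t.
  move=> t t0 t1; rewrite leNgt; apply/negP => Hlt.
  set tc : C := (t%:C)%C.
  have Htc : forall j, `|tc ^+ j| = ((t ^+ j)%:C)%C.
    by move=> j; rewrite normrX normRC ?(ltW t0) // rmorphXn.
  have Hinv : forall N, (n < N)%N ->
     `|series (fun j => a j * tc ^+ j) N - a n * tc ^+ n|
       <= ((2 * b * t ^+ n.+1 - 2 * b * t ^+ N)%:C)%C.
    elim=> // N IHN; rewrite ltnS leq_eqVlt => /orP [/eqP <- | HN].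
      rewrite /series /= big_nat_recr //= big_nat_cond big1 ?add0r.
        by rewrite subrr normr0 subrr.
      by move=> k /andP [/andP [_ Hk] _]; rewrite IH // mul0r.
    rewrite /series /= big_nat_recr //=.
    rewrite addrAC; apply: le_trans (ler_normD _ _) _.
    apply: le_trans (lerD (IHN HN) (_ : `|a N * tc ^+ N| <= ((b * t ^+ N)%:C)%C)) _.
      rewrite normrM Htc rmorphM /= -Bb; apply: ler_wpM2r; first by rewrite ler0c exprn_ge0 // ltW.
      exact: Hb.
    rewrite -rmorphD lecR [t ^+ N.+1]exprS.
    have H0 : 0 <= b * t ^+ N by rewrite mulr_ge0 // exprn_ge0 // ltW.
    have := mulr_ge0 H0 (_ : 0 <= 2^-1 - t); rewrite subr_ge0 => /(_ t1).
    nra.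
  have epspos : (0 : C) < (((al - 2 * b * t) * t ^+ n)%:C)%C.
    by rewrite ltcR mulr_gt0 ?subr_gt0 // exprn_gt0.
  have := cvgr0_norm_lt _ (Hs t t0 t1) _ epspos.
  case=> N0 _ HN0.
  have HN := HN0 (maxn N0 n.+1) (leq_maxl _ _); rewrite /= in HN.
  have HI := Hinv (maxn N0 n.+1) (leq_maxr _ _).
  set S := series _ _ in HN HI.
  have : `|a n * tc ^+ n| <= `|S| + `|S - a n * tc ^+ n|.
    have E : a n * tc ^+ n = S - (S - a n * tc ^+ n) by ring.
    by rewrite {1}E; apply: ler_normB.
  rewrite normrM Htc Ha -rmorphM => H1.
  have H2 := lt_le_trans (le_lt_trans H1 (ltr_leD HN HI)) (lexx _).
  rewrite -rmorphD ltcR exprS in H2.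
  have : 0 <= b * t ^+ maxn N0 n.+1 by rewrite mulr_ge0 // exprn_ge0 // ltW.
  nra.
have al00 : al <= 0.
  rewrite leNgt; apply/negP => alp.
  have t0 : 0 < al / (2 * al + 4 * b) by rewrite divr_gt0 //; nra.
  have Hd : 0 < 2 * al + 4 * b by nra.
  set t := al / (2 * al + 4 * b) in t0.
  have Ht : t * (2 * al + 4 * b) = al by rewrite /t divfK // gt_eqF.
  have t1 : t <= 2^-1.
    rewrite -(ler_pM2r Hd) Ht; nra.
  have := claim _ t0 t1.
  have := mulr_gt0 t0 alp.
  nra.
have : al = 0 by apply/le_anti; rewrite al00 al0.
by move=> al_0; apply/normr0_eq0; rewrite Ha al_0.
Qed.

Definition dsum (c : nat -> nat -> C) (x y : C) (n : nat) : C :=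
  \sum_(i < n.+1) c i (n - i)%N * (x ^+ i * y ^+ (n - i)%N).

Definition Rep (c : nat -> nat -> C) (rho : R) (G : C -> C -> C) :=
  forall x y : C, `|x| < (rho%:C)%C -> `|y| < (rho%:C)%C ->
    series (dsum c x y) @ \oo --> G x y.

Lemma dsum_scale c x y (t : C) n : dsum c (x * t) (y * t) n = dsum c x y n * t ^+ n.
Proof.
rewrite /dsum mulr_suml; apply: eq_bigr => i _.
have Hi : (i + (n - i) = n)%N by rewrite subnKC // -ltnS.
rewrite !exprMn -[in t ^+ n]Hi exprD; ring.
Qed.

Lemma Rep_zero_dsum c rho : Rep c rho (fun _ _ => 0) ->
  forall x y : C, `|x| < (rho%:C)%C -> `|y| < (rho%:C)%C -> forall n, dsum c x y n = 0.
Proof.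
move=> Hr x y hx hy.
have Hc := Hr x y hx hy.
have Hb := cvg_seq_bounded (cvgP _ (cvg_series_cvg_0 (cvgP _ Hc))).
case: Hb => M [Mr HM].
apply: (@core _ (M + 1)).

  by move=> n; apply: (HM (M + 1)); rewrite ?ltrDl.
move=> t t0 t1.
have tc0 : 0 <= ((t%:C)%C : C) by rewrite ler0c ltW.
have tc1 : `|((t%:C)%C : C)| <= 1.
  rewrite normRC ?(ltW t0) // (_ : (1 : C) = (1%:C)%C) // lecR.
  by apply: le_trans t1 _; rewrite invf_le1 // ler1n.
have -> : (fun j => dsum c x y j * ((t%:C)%C : C) ^+ j) = dsum c (x * (t%:C)%C) (y * (t%:C)%C).
  by apply/funext => j; rewrite dsum_scale.
apply: Hr.
  by rewrite normrM; apply: le_lt_trans hx; rewrite ler_piMr.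
by rewrite normrM; apply: le_lt_trans hy; rewrite ler_piMr.
Qed.

Lemma Rep_uniq c rho : 0 < rho -> Rep c rho (fun _ _ => 0) -> forall i j, c i j = 0.
Proof.
move=> rho0 Hr i j.
have Hz := Rep_zero_dsum Hr.
set n := (i + j)%N.
set p : C := ((rho / 2)%:C)%C.
have p0 : 0 < rho / 2 by rewrite divr_gt0.
have hp : `|p| < (rho%:C)%C by rewrite normRC ?ltW // ltcR ltr_pdivrMr // ltr_pMr // ltr1n.
pose a k := if (k < n.+1)%N then c k (n - k)%N * p ^+ n else 0.
have Ha := (@core a (\sum_(k < n.+1) `|c k (n - k)%N * p ^+ n|)).
have : a i = 0.
  apply: Ha.
    move=> k; rewrite /a; case: ifP => hk.
      rewrite (bigD1 (Ordinal hk)) //= lerDl; apply: sumr_ge0 => *; exact: normr_ge0.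
    by rewrite normr0; apply: sumr_ge0 => *; exact: normr_ge0.
  move=> t t0 t1.
  apply: cvg_near_cst; exists n.+1 => // N /= HN.
  rewrite /series /= (@big_cat_nat _ _ _ n.+1 0 N _ _ (leq0n n.+1) HN) /=.
  rewrite [X in _ + X]big1_seq ?addr0; last first.
    by move=> k /andP [_]; rewrite mem_index_iota => /andP [hk _]; rewrite /a ltnNge hk mul0r.
  have hpt : `|p * (t%:C)%C| < (rho%:C)%C.
    rewrite normrM (normRC (ltW t0)); apply: le_lt_trans hp.
    rewrite ler_piMr // ?normr_ge0 // (_ : (1 : C) = (1%:C)%C) // lecR.
    by apply: le_trans t1 _; rewrite invf_le1 // ler1n.
  apply: etrans (Hz _ _ hpt hp n); rewrite /dsum big_mkord; apply: eq_bigr => k _.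
  rewrite /a ltn_ord.
  have Hk : (k + (n - k) = n)%N by rewrite subnKC // -ltnS.
  rewrite -[in p ^+ n]Hk exprD exprMn; ring.
rewrite /a (_ : (i < n.+1)%N) ?ltnS ?leq_addr // (_ : (n - i)%N = j) ?addKn //.
move/eqP; rewrite mulf_eq0 expf_eq0 => /orP [/eqP //|/andP [_]].
by rewrite /p (_ : (0 : C) = (0%:C)%C) // (inj_eq (@complexI _)) gt_eqF.
Qed.

Lemma Rep_ext c rho G1 G2 : Rep c rho G1 ->
  (forall x y : C, `|x| < (rho%:C)%C -> `|y| < (rho%:C)%C -> G1 x y = G2 x y) ->
  Rep c rho G2.
Proof. by move=> H E x y hx hy; rewrite -E //; apply: H. Qed.

Lemma Rep_le c rho rho' G : rho' <= rho -> Rep c rho G -> Rep c rho' G.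
Proof.
move=> hr H x y hx hy; apply: H.
  by apply: lt_le_trans hx _; rewrite lecR.
by apply: lt_le_trans hy _; rewrite lecR.
Qed.

Lemma Rep_add c1 c2 rho G1 G2 : Rep c1 rho G1 -> Rep c2 rho G2 ->
  Rep (fun i j => c1 i j + c2 i j) rho (fun x y => G1 x y + G2 x y).
Proof.
move=> H1 H2 x y hx hy.
have -> : series (dsum (fun i j => c1 i j + c2 i j) x y) =
          (fun N => series (dsum c1 x y) N + series (dsum c2 x y) N).
  apply/funext => N; rewrite /series /= -big_split /=; apply: eq_bigr => k _.
  by rewrite /dsum -big_split /=; apply: eq_bigr => i _; rewrite mulrDl.
exact: cvgD (H1 x y hx hy) (H2 x y hx hy).
Qed.

Lemma Rep_scal k c rho G : Rep c rho G ->
  Rep (fun i j => k * c i j) rho (fun x y => k * G x y).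
Proof.
move=> H x y hx hy.
have -> : series (dsum (fun i j => k * c i j) x y) =
          (fun N => k * series (dsum c x y) N).
  apply/funext => N; rewrite /series /= mulr_sumr; apply: eq_bigr => n _.
  by rewrite /dsum mulr_sumr; apply: eq_bigr => i _; rewrite !mulrA.
exact: cvgMl_tmp _ (H x y hx hy).
Qed.

Lemma Rep_sub c1 c2 rho G1 G2 : Rep c1 rho G1 -> Rep c2 rho G2 ->
  Rep (fun i j => c1 i j - c2 i j) rho (fun x y => G1 x y - G2 x y).
Proof.
move=> H1 H2 x y hx hy.
have -> : series (dsum (fun i j => c1 i j - c2 i j) x y) =
          (fun N => series (dsum c1 x y) N - series (dsum c2 x y) N).
  apply/funext => N; rewrite /series /= -sumrB /=; apply: eq_bigr => k _.
  by rewrite /dsum -sumrB /=; apply: eq_bigr => i _; rewrite mulrBl.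
exact: cvgB (H1 x y hx hy) (H2 x y hx hy).
Qed.

Lemma Rep_scale (al be : C) c rho G : `|al| <= 1 -> `|be| <= 1 -> Rep c rho G ->
  Rep (fun i j => c i j * al ^+ i * be ^+ j) rho (fun x y => G (x * al) (y * be)).
Proof.
move=> ha hb H x y hx hy.
have -> : dsum (fun i j => c i j * al ^+ i * be ^+ j) x y = dsum c (x * al) (y * be).
  apply/funext => n; rewrite /dsum; apply: eq_bigr => i _; rewrite !exprMn; ring.
apply: H.
  by rewrite normrM; apply: le_lt_trans hx; rewrite ler_piMr.
by rewrite normrM; apply: le_lt_trans hy; rewrite ler_piMr.
Qed.

Lemma Rep_mulx c rho G : Rep c rho G ->
  Rep (fun i j => if i is i'.+1 then c i' j else 0) rho (fun x y => x * G x y).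
Proof.
move=> H x y hx hy.
rewrite -cvg_shiftS.
have -> : [sequence series (dsum (fun i j => if i is i'.+1 then c i' j else 0) x y) n.+1]_n
   = (fun N => x * series (dsum c x y) N).
  apply/funext => N; rewrite /series /= big_nat_recl //= mulr_sumr.
  rewrite /dsum big_ord1 /= mul0r add0r; apply: eq_bigr => n _.
  rewrite big_ord_recl /= mul0r add0r mulr_sumr; apply: eq_bigr => i _.
  by rewrite /bump /= add1n subSS exprS; ring.
exact: cvgMl_tmp _ (H x y hx hy).
Qed.

Lemma Rep_muly c rho G : Rep c rho G ->
  Rep (fun i j => if j is j'.+1 then c i j' else 0) rho (fun x y => y * G x y).
Proof.
move=> H x y hx hy.
rewrite -cvg_shiftS.
have -> : [sequence series (dsum (fun i j => if j is j'.+1 then c i j' else 0) x y) n.+1]_n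
   = (fun N => y * series (dsum c x y) N).
  apply/funext => N; rewrite /series /= big_nat_recl //= mulr_sumr.
  rewrite /dsum big_ord1 /= mul0r add0r; apply: eq_bigr => n _.
  rewrite big_ord_recr /= subnn mul0r addr0 mulr_sumr; apply: eq_bigr => i _.
  have hi : (i <= n)%N by rewrite -ltnS.
  by rewrite /= subSn // exprS; ring.
exact: cvgMl_tmp _ (H x y hx hy).
Qed.

Definition pt2 (x y : C) : 'I_2 -> C := fun k => if (k : nat) == 0%N then x else y.

Lemma sum2 (f : 'I_2 -> nat) : (\sum_(i < 2) f i = f ord0 + f (lift ord0 ord0))%N.
Proof. by rewrite big_ord_recl big_ord1. Qed.

Lemma hom_dsum (A : {ffun 'I_2 -> nat} -> C) x y n :
  Defs.hom A (pt2 x y) n = dsum (fun i j => A (idx2 i j)) x y n.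
Proof.
pose h (i : 'I_n.+1) : {ffun 'I_2 -> 'I_n.+1} :=
  [ffun k : 'I_2 => if (k : nat) == 0%N then i else inord (n - i)].
pose h' (be : {ffun 'I_2 -> 'I_n.+1}) : 'I_n.+1 := be ord0.
rewrite /Defs.hom (reindex_onto h h') /=; last first.
  move=> be; rewrite sum2 => /eqP Hs; apply/ffunP => k; rewrite ffunE /h'.
  case: k => [[|[|k]] hk] //=.
    by congr (be _); apply: val_inj.
  apply: val_inj; rewrite /= inordK; last by rewrite ltnS leq_subr.
  have -> : be (Ordinal hk) = be (lift ord0 ord0) by congr (be _); apply: val_inj.
  by rewrite -[X in (X - _)%N]Hs addKn.
rewrite /dsum; apply: eq_big => i.
  rewrite /h' /h ffunE /= eqxx andbT sum2 !ffunE /= inordK; last by rewrite ltnS leq_subr.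
  by rewrite subnKC ?eqxx //; exact: ltn_ord i.
move=> _.
have E : [ffun k : 'I_2 => nat_of_ord (h i k)] = idx2 i (n - i)%N.
  apply/ffunP => k; rewrite !ffunE /h ?ffunE.
  by case: k => [[|[|k]] hk] //=; rewrite inordK // ltnS leq_subr.
rewrite E; congr (_ * _).
by rewrite /mono big_ord_recl big_ord1 !ffunE /=.
Qed.

Lemma Rep_ps (A : {ffun 'I_2 -> nat} -> C) rho F :
  power_series_on A rho (uncurry2 F) -> Rep (fun i j => A (idx2 i j)) rho F.
Proof.
move=> H x y hx hy.
have [_ H2] := H (pt2 x y) (fun k => ltac:(rewrite /pt2; case: ifP => _ //)).
have -> : dsum (fun i j => A (idx2 i j)) x y = Defs.hom A (pt2 x y).
  by apply/funext => n; rewrite hom_dsum.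
by move: H2; rewrite /uncurry2 /pt2 !inordK.
Qed.
End Core.

Section Main.
Variable R : realType.
Local Notation C := ((R[i])^o).

Lemma lt_minC (z : C) (u v : R) : `|z| < ((Order.min u v)%:C)%C ->
  `|z| < (u%:C)%C /\ `|z| < (v%:C)%C.
Proof.
move=> h; split; apply: lt_le_trans h _; rewrite lecR.
  by rewrite ge_min lexx.
by rewrite ge_min lexx orbT.
Qed.

Lemma nz1 (w : C) : `|w| < 1 -> 1 - w != 0.
Proof.
move=> h; rewrite subr_eq0; apply/eqP => E; move: h; rewrite -E normr1 ltxx //.
Qed.

End Main.

Unset Implicit Arguments.

Theorem theorem2 (R : realType) (q : R) (hq0 : 0 < q) (hq1 : q < 1)
  (f : (R[i])^o -> (R[i])^o -> (R[i])^o -> (R[i])^o -> (R[i])^o -> (R[i])^o ->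
       (R[i])^o -> (R[i])^o) :
  analytic_at0 (uncurry7 f) ->
  (exists r : R, 0 < r /\
     forall a b c d e x y : (R[i])^o,
       `|a| < (r%:C)%C -> `|b| < (r%:C)%C -> `|c| < (r%:C)%C -> `|d| < (r%:C)%C ->
       `|e| < (r%:C)%C -> `|x| < (r%:C)%C -> `|y| < (r%:C)%C ->
       qeq q f a b c d e x y) ->
  exists r : R, 0 < r /\
    forall a b c d e : (R[i])^o,
      `|a| < (r%:C)%C -> `|b| < (r%:C)%C -> `|c| < (r%:C)%C -> `|d| < (r%:C)%C -> `|e| < (r%:C)%C ->
      (* for every power series expansion f(a,b,c,d,e,x,y) = sum_{m,k} A m k x^m y^k
         near (x,y) = (0,0), i.e. A_k(x) = sum_m A m k x^m: *)
      forall (A : {ffun 'I_2 -> nat} -> (R[i])^o) (rho : R), 0 < rho ->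
        power_series_on A rho (uncurry2 (f a b c d e)) ->
        forall k m : nat,
          A (idx2 m k) =
          Ecoef q a b c d e k * iter k (theta_coef q) (fun n => A (idx2 n 0)) m.
Proof.
move=> _ [r0 [r0p Hq]].
exists (Order.min r0 1); split; first by rewrite lt_min r0p ltr01.
move=> a b c d e ha hb hc hd he A rho rho0 HPS.
have [ha0 ha1] := lt_minC ha; have [hb0 hb1] := lt_minC hb; have [hc0 hc1] := lt_minC hc.
have [hd0 hd1] := lt_minC hd; have [he0 he1] := lt_minC he.
rewrite (_ : ((1%:C)%C : (R[i])^o) = 1) // in ha1 hb1 hc1 hd1 he1.
set Q : (R[i])^o := ((q%:C)%C : (R[i])^o).
have Q0 : Q != 0 by rewrite /Q (_ : (0 : (R[i])^o) = (0%:C)%C) // (inj_eq (@complexI _)) gt_eqF.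
have hQ : `|Q| <= 1.
  by rewrite /Q normRC ?(ltW hq0) // (_ : (1 : (R[i])^o) = (1%:C)%C) // lecR ltW.
have hQX : forall j, `|Q ^+ j| <= 1 by move=> j; rewrite normrX exprn_ile1.
have hQlt : forall j, `|Q ^+ j.+1| < 1.
  move=> j; rewrite normrX /Q normRC ?(ltW hq0) // -rmorphXn (_ : (1 : (R[i])^o) = (1%:C)%C) // ltcR.
  by rewrite exprn_ilt1 // ltW.
have h1 : `|(1 : (R[i])^o)| <= 1 by rewrite normr1.
set rho' := Order.min rho r0.
have rho'0 : 0 < rho' by rewrite lt_min rho0 r0p.
have HR : Rep (fun i j => A (idx2 i j)) rho' (f a b c d e).
  apply: Rep_le (Rep_ps HPS).
  rewrite /rho' minElt; case: ifP => [_|/negbT]; rewrite ?lexx // -leNgt //.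
pose S al be (hal : `|al| <= 1) (hbe : `|be| <= 1) := Rep_scale hal hbe HR.
have HL := Rep_add (Rep_sub (Rep_sub (S Q 1 hQ h1) (S Q Q hQ hQ))
              (Rep_scal (k := (d + e) * Q^-1) (Rep_sub (S Q Q hQ hQ) (S Q (Q ^+ 2) hQ (hQX 2)))))
           (Rep_scal (k := d * e * Q ^- 2) (Rep_sub (S Q (Q ^+ 2) hQ (hQX 2)) (S Q (Q ^+ 3) hQ (hQX 3)))).
have HRr := Rep_sub (Rep_add (Rep_sub (Rep_sub (S Q Q hQ hQ) (S 1 Q h1 hQ))
               (Rep_scal (k := a + b + c) (Rep_sub (S Q (Q ^+ 2) hQ (hQX 2)) (S 1 (Q ^+ 2) h1 (hQX 2)))))
               (Rep_scal (k := a * b + a * c + b * c) (Rep_sub (S Q (Q ^+ 3) hQ (hQX 3)) (S 1 (Q ^+ 3) h1 (hQX 3)))))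
               (Rep_scal (k := a * b * c) (Rep_sub (S Q (Q ^+ 4) hQ (hQX 4)) (S 1 (Q ^+ 4) h1 (hQX 4)))).
have Hg := Rep_sub (Rep_mulx HL) (Rep_muly HRr).
have Hz := Rep_uniq rho'0 (Rep_ext Hg (G2 := fun _ _ => 0) _).
lapply Hz; last first.
  move=> x y hx hy /=.
  have [hx0 hx1] := lt_minC hx; have [hy0 hy1] := lt_minC hy.
  have := Hq a b c d e x y ha0 hb0 hc0 hd0 he0 hx1 hy1.
  rewrite /qeq /= !mulr1 => ->; exact: subrr.
move=> {}Hz.
have E := fun m k => Hz m.+1 k.+1.
have rec : forall m k, A (idx2 m k.+1) * (Q ^+ m * ((1 - Q * Q ^+ k) * (1 - d * Q ^+ k) * (1 - e * Q ^+ k)))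
   = A (idx2 m.+1 k) * ((Q ^+ m * Q - 1) * Q ^+ k * ((1 - a * Q ^+ k) * (1 - b * Q ^+ k) * (1 - c * Q ^+ k))).
  move=> m k; have := E m k; rewrite /= !expr1n.
  rewrite (exprAC Q 2 k.+1) (exprAC Q 3 k.+1) (exprAC Q 2 k) (exprAC Q 3 k) (exprAC Q 4 k).
  rewrite !exprSr !expr0.
  set P := Q ^+ k; set M := Q ^+ m => H.
  apply: subr0_eq; apply: etrans H; field.
  exact: Q0.
have hz : forall (z : (R[i])^o) j, `|z| < 1 -> 1 - z * Q ^+ j != 0.
  move=> z j hzl; apply: nz1; rewrite normrM; apply: le_lt_trans hzl.
  by rewrite ler_piMr.
have hQz : forall j, 1 - Q * Q ^+ j != 0 by move=> j; rewrite -exprS; apply: nz1.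
have hqp : forall z k, `|z| < 1 -> qpoch q z k != 0.
  by move=> z k hzl; apply/prodf_neq0 => i _; apply: hz.
have hqQ : forall k, qpoch q Q k != 0.
  by move=> k; apply/prodf_neq0 => i _; apply: hQz.
have EcoefS : forall k, Ecoef q a b c d e k.+1 = Ecoef q a b c d e k *
   (- Q ^+ k * ((1 - a * Q ^+ k) * (1 - b * Q ^+ k) * (1 - c * Q ^+ k))
    / ((1 - Q * Q ^+ k) * (1 - d * Q ^+ k) * (1 - e * Q ^+ k))).
  move=> k.
  have Ha := hqp a k ha1; have Hb := hqp b k hb1; have Hc := hqp c k hc1.
  have Hd := hqp d k hd1; have He := hqp e k he1; have HQ := hqQ k.
  have Hd' := hz d k hd1; have He' := hz e k he1; have HQ' := hQz k.
  move: Ha Hb Hc Hd He HQ.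
  rewrite /Ecoef /qpoch !big_ord_recr /= binS bin1 exprD exprS.
  set pa := \prod_(i < k) _; set pb := \prod_(i < k) _; set pc := \prod_(i < k) _.
  set pd := \prod_(i < k) _; set pe := \prod_(i < k) _; set pQ := \prod_(i < k) _.
  move=> Ha Hb Hc Hd He HQ.
  field.
  by rewrite He' Hd' HQ' He Hd HQ.
elim=> [|k IH] m.
  by rewrite /Ecoef /qpoch !big_ord0 bin0n /= !expr0 !mulr1 invr1 !mul1r.
have Hnz : Q ^+ m * ((1 - Q * Q ^+ k) * (1 - d * Q ^+ k) * (1 - e * Q ^+ k)) != 0.
  have := hz d k hd1; have := hz e k he1; have := hQz k.
  move=> n1 n2 n3.
  by rewrite !mulf_neq0 ?expf_neq0.
apply: (mulIf Hnz); rewrite rec (IH m.+1) iterS EcoefS /theta_coef.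
set T := iter k _ _ _.
have Hd' := hz d k hd1; have He' := hz e k he1; have HQ' := hQz k.
have HM : Q ^+ m != 0 by rewrite expf_neq0.
rewrite exprSr.
set P := Q ^+ k; set M := Q ^+ m.
field.
by rewrite He' Hd' HQ' HM.
Qed.
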